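(* Let $a$ be an automatic sequence and $\alpha$ a letter such that the density of $\{n: a(n)=\alpha\}$ exists and equals $0$. Then the upper Banach density of $\{n:a(n)=\alpha\}$, namely $\limsup_{N-M\to\infty}\frac{\#\{M\le n\le N: a(n)=\alpha\}}{N-M+1}$, is also $0$.
   Context: A sequence $a$ on a finite alphabet is automatic if for some $k\ge2$ there is a finite set of states $Q$, a transition map $\delta:Q\times\{0,\dots,k-1\}\to Q$ extended to words letter by letter, an initial state $q_0$ and an output map $\tau$ with $a(n)=\tau(\delta(q_0,(n)_k))$, $(n)_k$ being the base-$k$ expansion of $n$ (most significant digit first). *)

(* Defs.v *)
From mathcomp Require Import all_boot all_order all_algebra.
Set Implicit Arguments. Unset Strict Implicit. Unset Printing Implicit Defensive.
Import Order.TTheory GRing.Theory Num.Theory.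
Local Open Scope ring_scope.

(* Base-b digits of n, least significant first, for b >= 2; (0)_b = empty word.
   [fuel] = n suffices since n %/ b < n for n > 0. *)
Fixpoint digits_lsb_aux (b fuel n : nat) : seq nat :=
  match fuel with
  | 0 => [::]
  | fuel'.+1 => if n == 0 then [::] else (n %% b)%N :: digits_lsb_aux b fuel' (n %/ b)%N
  end.

Definition base_expansion (k n : nat) : seq 'I_(k.+2) :=
  rev (map (fun d => inord d) (digits_lsb_aux k.+2 n n)).

Definition automatic (T : finType) (a : nat -> T) : Prop :=
  exists (k : nat) (Q : finType) (delta : Q -> 'I_(k.+2) -> Q) (q0 : Q) (tau : Q -> T),
    forall n, a n = tau (foldl delta q0 (base_expansion k n)).

Definition count_in (T : eqType) (a : nat -> T) (alpha : T) (M N : nat) : nat :=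
  count (fun n => a n == alpha) (iota M (N.+1 - M)%N).

Definition density_zero (T : eqType) (a : nat -> T) (alpha : T) : Prop :=
  forall eps : rat, 0 < eps -> exists N0 : nat, forall N : nat, (N0 <= N)%N -> (0 < N)%N ->
    (count (fun n => a n == alpha) (iota 0 N))%:R / N%:R <= eps.

Definition upper_banach_density_zero (T : eqType) (a : nat -> T) (alpha : T) : Prop :=
  forall eps : rat, 0 < eps -> exists L : nat, forall M N : nat, (M <= N)%N -> (L <= N - M)%N ->
    (count_in a alpha M N)%:R / (N - M).+1%:R <= eps.

(* Main.v *)
Require Import Defs.
From mathcomp Require Import all_boot all_order all_algebra.
From mathcomp Require Import zify.
From Stdlib Require Import Classical.
Import Order.TTheory GRing.Theory Num.Theory.

Lemma aux_fuel b : 1 < b -> forall f1 f2 n, n <= f1 -> n <= f2 ->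
  digits_lsb_aux b f1 n = digits_lsb_aux b f2 n.
Proof.
move=> hb; elim=> [|f1 IH] [|f2] n h1 h2 /=.
- by [].
- by move: h1; rewrite leqn0 => /eqP ->.
- by move: h2; rewrite leqn0 => /eqP ->.
case: eqP => // /eqP hn; have hn' : 0 < n by rewrite lt0n.
have hlt := ltn_Pdiv hb hn'.
congr (_ :: _); apply: IH; lia.
Qed.

Lemma aux_step b m r : 1 < b -> 0 < m -> r < b ->
  digits_lsb_aux b (m * b + r) (m * b + r) = r :: digits_lsb_aux b m m.
Proof.
move=> hb hm hr.
have hpos : 0 < m * b + r by rewrite ltn_addr // muln_gt0 hm ltnW.
case E: (m * b + r) => [|f]; first by rewrite E in hpos.
rewrite /= -E.
idtac.
have hmod : (m * b + r) %% b = r by rewrite modnMDl modn_small.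
have hdiv : (m * b + r) %/ b = m by rewrite divnMDl ?(ltnW hb) // divn_small // addn0.
rewrite hmod hdiv; congr (_ :: _); apply: aux_fuel => //.
have : m < m * b by rewrite ltn_Pmulr.
lia.
Qed.

Fixpoint pad (b L r : nat) : seq nat :=
  match L with 0 => [::] | L'.+1 => r %% b :: pad b L' (r %/ b) end.

Lemma aux_block b L : 1 < b -> forall m r, 0 < m -> r < b ^ L ->
  digits_lsb_aux b (m * b ^ L + r) (m * b ^ L + r) = pad b L r ++ digits_lsb_aux b m m.
Proof.
move=> hb; elim: L => [|L IH] m r hm hr.
  by move: hr; rewrite expn0 ltnS leqn0 => /eqP ->; rewrite muln1 addn0.
have hb0 : 0 < b by apply: ltnW.
have E : m * b ^ L.+1 + r = (m * b ^ L + r %/ b) * b + r %% b.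
  by rewrite mulnDl -mulnA -expnSr -addnA -divn_eq.
rewrite E aux_step //; last by rewrite ltn_mod.
  rewrite IH //; by rewrite ltn_divLR // -expnSr.
by rewrite ltn_addr // muln_gt0 hm expn_gt0 hb0.
Qed.

Lemma be_block k L m r : 0 < m -> r < k.+2 ^ L ->
  base_expansion k (m * k.+2 ^ L + r) =
  base_expansion k m ++ rev (map (fun d => inord d) (pad k.+2 L r)).
Proof. by move=> hm hr; rewrite /base_expansion aux_block // map_cat rev_cat. Qed.

Lemma count_sub (P : pred nat) M l M' l' : M' <= M -> M + l <= M' + l' ->
  count P (iota M l) <= count P (iota M' l').
Proof.
move=> h1 h2.
have El : l' = (M - M') + (l + (M' + l' - (M + l))) by lia.
rewrite El !iotaD !count_cat (subnKC h1); lia.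
Qed.

Section Auto.
Context (T : finType) (a : nat -> T) (alpha : T) (k : nat) (Q : finType)
  (delta : Q -> 'I_k.+2 -> Q) (q0 : Q) (tau : Q -> T)
  (Ha : forall n, a n = tau (foldl delta q0 (base_expansion k n))).

Definition st m := foldl delta q0 (base_expansion k m).

Definition bc K m := count (fun n => a n == alpha) (iota (m * K) K).

Lemma bc_eq L m m' : 0 < m -> 0 < m' -> st m = st m' ->
  bc (k.+2 ^ L) m = bc (k.+2 ^ L) m'.
Proof.
move=> hm hm' hst.
rewrite /bc -(addn0 (m * _)) -(addn0 (m' * _)) !iotaDl !count_map.
apply: eq_in_count => r; rewrite mem_iota add0n => /andP[_ hr] /=.
rewrite !Ha !be_block // !foldl_cat.
by move: hst; rewrite /st => ->.
Qed.

Lemma exists_B : exists B, forall m, 0 < m -> exists m', 0 < m' <= B /\ st m' = st m.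
Proof.
suff H : forall s : seq Q, exists B, forall m, 0 < m -> st m \in s ->
   exists m', 0 < m' <= B /\ st m' = st m.
  have [B HB] := H (enum Q); exists B => m hm; apply: HB => //; by rewrite mem_enum.
elim=> [|q s [B IH]]; first by exists 0.
case: (classic (exists m0, 0 < m0 /\ st m0 = q)) => [[m0 [hm0 hq]]|hno].
  exists (maxn B m0) => m hm; rewrite in_cons => /orP[/eqP hq'|hs].
    exists m0; split; last by rewrite hq hq'.
    by rewrite hm0 leq_maxr.
  have [m' [hm' he]] := IH m hm hs; exists m'; split => //; lia.
exists B => m hm; rewrite in_cons => /orP[/eqP hq'|hs].
  by exfalso; apply: hno; exists m.
exact: IH.
Qed.

Lemma bc_sum K c : (forall m, bc K m <= c) -> forall n s,
  count (fun n => a n == alpha) (iota (s * K) (n * K)) <= n * c.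
Proof.
move=> hbc; elim=> [|n IH] s; first by rewrite mul0n.
rewrite mulSn iotaD count_cat.
have -> : s * K + K = s.+1 * K by rewrite mulSn addnC.
have := hbc s; have := IH s.+1; rewrite /bc; lia.
Qed.

End Auto.

From mathcomp Require Import ring lra.
Local Open Scope ring_scope.

Theorem lemma3p7 (T : finType) (a : nat -> T) (alpha : T) :
  automatic a -> density_zero a alpha -> upper_banach_density_zero a alpha.
Proof.
move=> [k [Q [delta [q0 [tau Ha]]]]] Hd eps heps.
have [B HB] := @exists_B k Q delta q0.
pose eta : rat := eps / (4 * B.+1)%:R.
have heta : 0 < eta by rewrite divr_gt0 // ltr0n.
have [N0 HN0] := Hd eta heta.
pose K := (k.+2 ^ N0)%N.
have hK0 : (0 < K)%N by rewrite expn_gt0.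
have hKN : (N0 <= K)%N by apply: ltnW; apply: ltn_expl.
pose c := count (fun n => a n == alpha) (iota 0 (B.+1 * K)).
have hc : c%:R <= eps * K%:R / 4%:R.
  have hBK : (0 < B.+1 * K)%N by rewrite muln_gt0 hK0.
  have H := HN0 (B.+1 * K)%N (leq_trans hKN (leq_pmull _ (ltn0Sn _))) hBK.
  rewrite ler_pdivrMr ?ltr0n ?muln_gt0 ?hK0 // in H.
  apply: (le_trans H); rewrite le_eqVlt; apply/orP; left; apply/eqP.
  rewrite /eta !natrM; field.
  by rewrite addrC natr1 pnatr_eq0.
have hbc : forall m, (bc T a alpha K m <= c)%N.
  case=> [|m].
    by rewrite /bc mul0n; apply: count_sub => //; rewrite !add0n leq_pmull.
  have [m' [hm' he]] := HB m.+1 (ltn0Sn _).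
  rewrite (@bc_eq T a alpha k Q delta q0 tau Ha N0 m.+1 m' (ltn0Sn m) (proj1 (andP hm')) (esym he)).
  rewrite /bc; apply: count_sub => //; rewrite add0n -mulSnr leq_mul2r.
  by rewrite ltnS (proj2 (andP hm')) orbT.
exists K => M N hMN hL.
set n := ((N %/ K).+1 - M %/ K)%N.
have hcount : (count_in a alpha M N <= n * c)%N.
  rewrite /count_in; apply: (leq_trans _ (@bc_sum T a alpha K c hbc n (M %/ K))).
  apply: count_sub.
    exact: leq_trunc_div.
  have h1 := ltn_ceil N hK0.
  have h2 : (M %/ K <= N %/ K)%N by apply: leq_div2r.
  have h3 : (M %/ K * K <= (N %/ K).+1 * K)%N by apply: leq_mul => //; apply: leqW.
  rewrite /n mulnBl.
  lia.
have hnK : (n * K <= 3 * (N - M).+1)%N.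
  have h1 := leq_trunc_div N K.
  have h3 := ltn_ceil M hK0.
  rewrite /n mulnBl mulSn; lia.
rewrite ler_pdivrMr ?ltr0n //.
apply: (@le_trans _ _ ((n * c)%N%:R)); first by rewrite ler_nat.
rewrite natrM.
have hn0 : (0 : rat) <= n%:R by [].
have e1 : n%:R * c%:R <= n%:R * (eps * K%:R / 4%:R) :> rat by apply: ler_wpM2l.
have e2 : (n * K)%:R <= (3 * (N - M).+1)%:R :> rat by rewrite ler_nat.
rewrite !natrM in e2.
apply: (le_trans e1).
have : n%:R * (eps * K%:R / 4%:R) = eps * (n%:R * K%:R) / 4%:R :> rat by field.
move=> ->.
set l : rat := ((N - M).+1)%:R.
have hl : 0 <= l by [].
set x : rat := n%:R * K%:R.
have : eps * x <= eps * (3 * l) by rewrite ler_wpM2l // ltW.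
move: heps hl; nra.
Qed.
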